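(* Let $X,Y,Z$ be random variables on finite alphabets $\mathcal{X},\mathcal{Y},\mathcal{Z}$ with $H(Z\mid X,Y)=0$. Define the synergistic information $\operatorname{Syn}(X,Y\to Z)=I(X;Z\mid Y)-\operatorname{Un}(X\to Z\mid Y)$ with $\operatorname{Un}$ as below. Then $\operatorname{Syn}(X,Y\to Z)\ge 0$.
   Context: For each $y\in\mathcal{Y}$ with $\Pr(Y=y)>0$, let $(A_y,B_y,C_y)$ be the random triple on $\mathcal{X}\times\mathcal{Y}\times\mathcal{Z}$ with $\Pr(A_y=x,B_y=y',C_y=z)=0$ if $\Pr(Z=z)=0$ and $\Pr(A_y=x,B_y=y',C_y=z)=\Pr(X=x,Y=y',Z=z)\Pr(Z=z\mid Y=y)/\Pr(Z=z)$ otherwise. The unique information is $\operatorname{Un}(X\to Z\mid Y)=\sum_{y:\Pr(Y=y)>0}\Pr(Y=y)\,I(A_y;C_y)$, where $I$ is (conditional) mutual information and $H$ Shannon entropy. *)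

(* Defs.v *)
From HB Require Import structures.
From mathcomp Require Import all_boot all_order all_algebra.
From mathcomp Require Import all_classical all_reals.
From mathcomp Require Import exp.
Set Implicit Arguments. Unset Strict Implicit. Unset Printing Implicit Defensive.
Import Order.TTheory GRing.Theory Num.Theory.
Local Open Scope ring_scope.

Section InfoDefs.
Variable R : realType.

Definition is_pmf3 (X Y Z : finType) (P : X -> Y -> Z -> R) : Prop :=
  (forall x y z, 0 <= P x y z) /\ \sum_x \sum_y \sum_z P x y z = 1.

Definition margY (X Y Z : finType) (P : X -> Y -> Z -> R) (y : Y) : R :=
  \sum_x \sum_z P x y z.
Definition margZ (X Y Z : finType) (P : X -> Y -> Z -> R) (z : Z) : R :=
  \sum_x \sum_y P x y z.
Definition margXY (X Y Z : finType) (P : X -> Y -> Z -> R) (x : X) (y : Y) : R :=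
  \sum_z P x y z.
Definition margYZ (X Y Z : finType) (P : X -> Y -> Z -> R) (y : Y) (z : Z) : R :=
  \sum_x P x y z.

Definition mutinf (A C : finType) (Q : A -> C -> R) : R :=
  \sum_a \sum_c (if 0 < Q a c then
     Q a c * ln (Q a c / ((\sum_c' Q a c') * (\sum_a' Q a' c))) else 0).

Definition condmutinf (X Y Z : finType) (P : X -> Y -> Z -> R) : R :=
  \sum_x \sum_y \sum_z (if 0 < P x y z then
     P x y z * ln (P x y z * margY P y / (margXY P x y * margYZ P y z)) else 0).

Definition condent_Z_XY (X Y Z : finType) (P : X -> Y -> Z -> R) : R :=
  - \sum_x \sum_y \sum_z (if 0 < P x y z then
     P x y z * ln (P x y z / margXY P x y) else 0).

(* The triple (A_y,B_y,C_y) of the paper. *)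
Definition tilt (X Y Z : finType) (P : X -> Y -> Z -> R) (y : Y)
  (x : X) (y' : Y) (z : Z) : R :=
  if margZ P z == 0 then 0
  else P x y' z * (margYZ P y z / margY P y) / margZ P z.

Definition unique_info (X Y Z : finType) (P : X -> Y -> Z -> R) : R :=
  \sum_(y | 0 < margY P y)
     margY P y * mutinf (fun x z => \sum_y' tilt P y x y' z).

Definition synergy (X Y Z : finType) (P : X -> Y -> Z -> R) : R :=
  condmutinf P - unique_info P.

End InfoDefs.

(* Main.v *)
Require Import Defs.
From HB Require Import structures.
From mathcomp Require Import all_boot all_order all_algebra.
From mathcomp Require Import all_classical all_reals.
From mathcomp Require Import exp.
Import Order.TTheory GRing.Theory Num.Theory.
Local Open Scope ring_scope.


Lemma xln_le0 {R : realType} (a b : R) : 0 <= a -> a <= b -> a * ln (a / b) <= 0.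
Proof.
move=> a0 ab; have [->|an0] := eqVneq a 0; first by rewrite mul0r.
have ap : 0 < a by rewrite lt_neqAle eq_sym an0.
have bp : 0 < b by apply: lt_le_trans ab.
rewrite mulr_ge0_le0 // ln_le0 // ler_pdivrMr // mul1r //.
Qed.

Lemma single_le {R : realType} {I : finType} (F : I -> R) i :
  (forall j, 0 <= F j) -> F i <= \sum_j F j.
Proof.
by move=> h; rewrite (bigD1 i) //= ler_wpDr // sumr_ge0.
Qed.

Lemma nsum_eq0 {R : realType} {I : finType} (F : I -> R) :
  (forall i, F i <= 0) -> \sum_i F i = 0 -> forall i, F i = 0.
Proof.
move=> h s i; apply/eqP; rewrite -oppr_eq0; apply/eqP.
apply: (@psumr_eq0P _ _ predT (fun i => - F i)) => //.
  by move=> j _; rewrite oppr_ge0.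
by rewrite sumrN s oppr0.
Qed.

Lemma mutinf_le {R : realType} {A C : finType} (Q : A -> C -> R) :
  (forall a c, 0 <= Q a c) ->
  mutinf Q <= - \sum_c (\sum_a Q a c) * ln (\sum_a Q a c).
Proof.
move=> Q0.
have -> : - \sum_c (\sum_a Q a c) * ln (\sum_a Q a c)
   = \sum_a \sum_c - (Q a c * ln (\sum_a' Q a' c)).
  rewrite exchange_big /= -sumrN; apply: eq_bigr => c _.
  by rewrite mulr_suml sumrN.
apply: ler_sum => a _; apply: ler_sum => c _.
case: ifP => [qp|qn].
  have qa : 0 < \sum_c' Q a c' by apply: (lt_le_trans qp) (@single_le _ _ (Q a) c (Q0 a)).
  have qc : 0 < \sum_a' Q a' c
    by apply: (lt_le_trans qp) (@single_le _ _ (fun a' => Q a' c) a (fun j => Q0 j c)).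
  rewrite invfM mulrA -/(Q a c / _) ln_div ?posrE ?divr_gt0 //.
  rewrite mulrBr lerBlDr addNr.
  by apply: xln_le0; [exact: ltW | exact: (@single_le _ _ (Q a) c (Q0 a))].
have -> : Q a c = 0 by apply/eqP; rewrite eq_le Q0 andbT leNgt qn.
by rewrite mul0r oppr0.
Qed.

Theorem corollary4 (R : realType) (X Y Z : finType) (P : X -> Y -> Z -> R)
  (hP : is_pmf3 P) (hdet : condent_Z_XY P = 0) :
  0 <= synergy P.
Proof.
case: hP => P0 _.
have hXY : forall x y z, P x y z <= margXY P x y.
  by move=> x y z; apply: (@single_le _ _ (P x y) z (P0 x y)).
have hYZ : forall x y z, P x y z <= margYZ P y z.
  by move=> x y z; apply: (@single_le _ _ (fun x => P x y z) x (fun x => P0 x y z)).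
have nYZ : forall y z, 0 <= margYZ P y z by move=> y z; apply: sumr_ge0.
have nY : forall y, 0 <= margY P y.
  by move=> y; apply: sumr_ge0 => x _; apply: sumr_ge0.
have hYZY : forall y z, margYZ P y z <= margY P y.
  move=> y z; rewrite /margY exchange_big /=.
  exact: (@single_le _ _ (fun z => margYZ P y z) z (nYZ y)).
have hYZZ : forall y z, margYZ P y z <= margZ P z.
  move=> y z; apply: ler_sum => x _.
  exact: (@single_le _ _ (fun y => P x y z) y (fun y => P0 x y z)).
have det : forall x y z, 0 < P x y z -> P x y z = margXY P x y.
  move: hdet; rewrite /condent_Z_XY => /eqP; rewrite oppr_eq0 => /eqP h.
  have hle : forall x y z, (if 0 < P x y z then
     P x y z * ln (P x y z / margXY P x y) else 0) <= 0.
    move=> x y z; case: ifP => // _; apply: xln_le0; [exact: P0 | exact: hXY].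
  move=> x y z qp.
  have hle2 : forall x y, \sum_z (if 0 < P x y z then
     P x y z * ln (P x y z / margXY P x y) else 0) <= 0.
    by move=> x' y'; apply: sumr_le0 => z' _; exact: hle.
  have hle1 : forall x, \sum_y \sum_z (if 0 < P x y z then
     P x y z * ln (P x y z / margXY P x y) else 0) <= 0.
    by move=> x'; apply: sumr_le0 => y' _; exact: hle2.
  have h1 := nsum_eq0 _ hle1 h x.
  have h2 := nsum_eq0 _ (hle2 x) h1 y.
  have h3 := nsum_eq0 _ (hle x y) h2 z.
  have pxy : 0 < margXY P x y by apply: (lt_le_trans qp).
  move: h3; rewrite qp => /eqP; rewrite mulf_eq0 (gt_eqF qp) /= ln_eq0 ?divr_gt0 //.
  move=> /eqP /(congr1 (fun t => t * margXY P x y)).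
  by rewrite divfK ?mul1r // gt_eqF.
have stepB : condmutinf P = \sum_y - \sum_z margYZ P y z * ln (margYZ P y z / margY P y).
  rewrite /condmutinf.
  transitivity (\sum_x \sum_y \sum_z - (P x y z * ln (margYZ P y z / margY P y))).
    apply: eq_bigr => x _; apply: eq_bigr => y _; apply: eq_bigr => z _.
    case: ifP => qp.
      have pyz : 0 < margYZ P y z by apply: (lt_le_trans qp).
      have py : 0 < margY P y by apply: (lt_le_trans pyz).
      rewrite -(det _ _ _ qp) invfM mulrACA divff ?gt_eqF // mul1r.
      by rewrite -invf_div lnV ?posrE ?divr_gt0 // mulrN.
    have -> : P x y z = 0 by apply/eqP; rewrite eq_le P0 andbT leNgt qp.
    by rewrite mul0r oppr0.
  rewrite exchange_big; apply: eq_bigr => y _; rewrite -sumrN (exchange_big (R := R)) /=.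
  by apply: eq_bigr => z _; rewrite sumrN -mulr_suml.
have stepC : unique_info P <= \sum_(y | 0 < margY P y)
      - \sum_z margYZ P y z * ln (margYZ P y z / margY P y).
  rewrite /unique_info; apply: ler_sum => y yp.
  have Q0 : forall x z, 0 <= \sum_y' tilt P y x y' z.
    move=> x z; apply: sumr_ge0 => y' _; rewrite /tilt; case: ifP => // _.
    by apply: divr_ge0; [apply: mulr_ge0; [exact: P0 | exact: divr_ge0] | apply: sumr_ge0 => ? _; apply: sumr_ge0].
  have qc : forall z, \sum_x \sum_y' tilt P y x y' z = margYZ P y z / margY P y.
    move=> z; rewrite /tilt; have [hz|hz] := eqVneq (margZ P z) 0.
      rewrite big1; last by move=> x _; rewrite big1 // => y' _; rewrite hz eqxx.
      have -> : margYZ P y z = 0 by apply/eqP; rewrite eq_le nYZ andbT -hz hYZZ.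
      by rewrite mul0r.
    transitivity (\sum_x (\sum_y' P x y' z) * (margYZ P y z / margY P y / margZ P z)).
      apply: eq_bigr => x _; rewrite [RHS]mulr_suml; apply: eq_bigr => y' _.
      by rewrite !mulrA.
    by rewrite -mulr_suml -/(margZ P z) mulrCA divff // mulr1.
  apply: le_trans (ler_wpM2l (ltW yp) (mutinf_le _ Q0)) _.
  rewrite (eq_bigr (fun z => margYZ P y z / margY P y * ln (margYZ P y z / margY P y)));
    last by move=> z _; rewrite qc.
  rewrite mulrN mulr_sumr le_eqVlt; apply/orP; left; apply/eqP; congr (- _).
  by apply: eq_bigr => z _; rewrite mulrA mulrCA divff ?gt_eqF // mulr1.
have stepD : \sum_(y | 0 < margY P y)
      - \sum_z margYZ P y z * ln (margYZ P y z / margY P y) <=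
    \sum_y - \sum_z margYZ P y z * ln (margYZ P y z / margY P y).
  rewrite [X in _ <= X](bigID (fun y => 0 < margY P y)) /= lerDl.
  apply: sumr_ge0 => y _; rewrite oppr_ge0; apply: sumr_le0 => z _.
  exact: xln_le0.
by rewrite /synergy subr_ge0 stepB (le_trans stepC stepD).
Qed.
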